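(* Let $S$ be a $0$-left cancellative semigroup equipped with a homogeneous $N$-valued length function $\ell$. Let $r\in S$ and let $\sigma$ be an unbounded string with $\sigma\cap rS\neq\emptyset$. Then: (i) $r^{-1}*\sigma=\{t\in S: rt\in\sigma\}$ is unbounded; (ii) if $\mu$ is a string with $r^{-1}*\sigma\subseteq\mu$, then $rx\neq0$ for every $x\in\mu$; (iii) if $\sigma$ is a maximal string, then $r^{-1}*\sigma$ is also a maximal string.
   Context: $S$ has zero $0$, $S'=S\setminus\{0\}$; $0$-left cancellative: $st=sr\neq0\Rightarrow t=r$. $\tilde S=S\cup\{1\}$ ($1$ an adjoined identity); $s\mid t$ means $t\in s\tilde S$. A string is a nonempty $\sigma\subseteq S$ with $0\notin\sigma$, closed under divisors, and in which any two elements have a common multiple in $\sigma$; maximal means not properly contained in another string. Let $N$ be a totally ordered set. An $N$-valued length function is $\ell:S'\to N$ such that for $r,s,t\in S'$: (a) $s\mid t\Rightarrow\ell(s)\le\ell(t)$; (b) if $r\mid st\neq0$ and $\ell(r)\le\ell(s)$ then $r\mid s$. A set $X\subseteq S'$ is bounded if $\ell(s)\le n_0$ for all $s\in X$, for some $n_0\in N$. $\ell$ is homogeneous if for every $r\in S$ and every bounded $X\subseteq\{x\in S':rx\neq0\}$, the set $rX$ is bounded. *)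

(* Defs.v *)
From mathcomp Require Import all_boot all_order.
Set Implicit Arguments. Unset Strict Implicit. Unset Printing Implicit Defensive.
Import Order.TTheory.
Local Open Scope order_scope.

Definition semigroup_with_zero (S : Type) (mul : S -> S -> S) (z : S) : Prop :=
  (forall a b c, mul a (mul b c) = mul (mul a b) c) /\
  (forall a, mul z a = z) /\ (forall a, mul a z = z).

Definition zero_left_cancellative (S : Type) (mul : S -> S -> S) (z : S) : Prop :=
  forall s t r, mul s t = mul s r -> mul s t <> z -> t = r.

Definition sdvd (S : Type) (mul : S -> S -> S) (s t : S) : Prop :=
  t = s \/ exists u, t = mul s u.

Definition is_string (S : Type) (mul : S -> S -> S) (z : S) (sigma : S -> Prop) : Prop :=
  (exists x, sigma x) /\
  ~ sigma z /\
  (forall s t, sigma t -> sdvd mul s t -> sigma s) /\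
  (forall s t, sigma s -> sigma t ->
     exists u, sigma u /\ sdvd mul s u /\ sdvd mul t u).

Definition is_maximal_string (S : Type) (mul : S -> S -> S) (z : S) (sigma : S -> Prop) : Prop :=
  is_string mul z sigma /\
  forall tau, is_string mul z tau -> (forall x, sigma x -> tau x) ->
    forall x, tau x -> sigma x.

(* N-valued length function ell : S' -> N (given as a total function on S,
   only its values on S' = S \ {0} matter). *)
Definition is_length_function (S : Type) (mul : S -> S -> S) (z : S)
    (d : Order.disp_t) (N : orderType d) (ell : S -> N) : Prop :=
  (forall s t, s <> z -> t <> z -> sdvd mul s t -> ell s <= ell t) /\
  (forall r s t, r <> z -> s <> z -> t <> z -> mul s t <> z ->
     sdvd mul r (mul s t) -> ell r <= ell s -> sdvd mul r s).

Definition bounded (S : Type) (d : Order.disp_t) (N : orderType d) (ell : S -> N)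
    (X : S -> Prop) : Prop :=
  exists n0 : N, forall s, X s -> ell s <= n0.

Definition homogeneous (S : Type) (mul : S -> S -> S) (z : S)
    (d : Order.disp_t) (N : orderType d) (ell : S -> N) : Prop :=
  forall (r : S) (X : S -> Prop),
    (forall x, X x -> x <> z /\ mul r x <> z) ->
    bounded ell X ->
    bounded ell (fun y => exists x, X x /\ y = mul r x).

Definition rinv_star (S : Type) (mul : S -> S -> S) (r : S) (sigma : S -> Prop) : S -> Prop :=
  fun t => sigma (mul r t).

(* Main.v *)
Require Import Defs.
From mathcomp Require Import all_boot all_order.
Import Order.TTheory.
Set Implicit Arguments.
Local Open Scope order_scope.
Local Notation sdvd := Defs.sdvd.

Section Aux.
Variables (S : Type) (mul : S -> S -> S) (z : S).
Hypothesis HS : semigroup_with_zero mul z.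

Lemma sdvd_refl (a : S) : sdvd mul a a.
Proof. by left. Qed.

Lemma sdvd_trans (a b c : S) : sdvd mul a b -> sdvd mul b c -> sdvd mul a c.
Proof.
case: HS => Ha _.
move=> [->|[u ->]] [->|[v ->]].
- by left.
- by right; exists v.
- by right; exists u.
- by right; exists (mul u v); rewrite Ha.
Qed.

Lemma sdvd_lmul (r a b : S) : sdvd mul a b -> sdvd mul (mul r a) (mul r b).
Proof.
case: HS => Ha _.
move=> [->|[u ->]]; first by left.
by right; exists u; rewrite Ha.
Qed.

Lemma sdvd_z (a : S) : sdvd mul z a -> a = z.
Proof. case: HS => _ [Hz _]. by move=> [->|[u ->]]. Qed.
End Aux.

Theorem lemma13p3 (S : Type) (mul : S -> S -> S) (z : S)
  (d : Order.disp_t) (N : orderType d) (ell : S -> N)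
  (HS : semigroup_with_zero mul z)
  (Hcanc : zero_left_cancellative mul z)
  (Hell : is_length_function mul z ell)
  (Hhom : homogeneous mul z ell)
  (r : S) (sigma : S -> Prop)
  (Hsigma : is_string mul z sigma)
  (Hunb : ~ bounded ell sigma)
  (Hmeet : exists s, sigma (mul r s)) :
  ~ bounded ell (rinv_star mul r sigma) /\
  (forall mu, is_string mul z mu ->
     (forall x, rinv_star mul r sigma x -> mu x) ->
     forall x, mu x -> mul r x <> z) /\
  (is_maximal_string mul z sigma -> is_maximal_string mul z (rinv_star mul r sigma)).
Proof.
have [Hass [Hz0 H0z]] := HS.
have [Hl1 Hl2] := Hell.
have [[s0 Hs0] [Hnz [Hdc Hcm]]] := Hsigma.
case: Hmeet => m Hm.
have Hup : forall y, sigma y -> exists t, sigma (mul r t) /\ sdvd mul y (mul r t).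
  move=> y Hy; have [u [Hu [Hyu Hru]]] := Hcm _ _ Hy Hm.
  case: Hru => [Eu|[v Eu]].
  - by exists m; rewrite -Eu.
  - by exists (mul m v); rewrite Hass -Eu.
have Hi : ~ bounded ell (rinv_star mul r sigma).
  move=> Hb.
  have Hb' : bounded ell (fun t => rinv_star mul r sigma t /\ t <> z).
    by case: Hb => n0 Hn0; exists n0 => s [Hs _]; apply: Hn0.
  have := Hhom r (fun t => rinv_star mul r sigma t /\ t <> z).
  case.
  - move=> x [Hx Hxz]; split=> // E; by rewrite /rinv_star E in Hx.
  - exact: Hb'.
  move=> n1 Hn1; apply: Hunb; exists n1 => y Hy.
  have [t [Ht Hyt]] := Hup y Hy.
  have Htz : t <> z by move=> E; apply: Hnz; rewrite E H0z in Ht.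
  apply: le_trans (Hn1 (mul r t) _).
  - apply: Hl1 => //.
    + by move=> E; apply: Hnz; rewrite -E.
    + by move=> E; apply: Hnz; rewrite -E.
  - by exists t; split.
have Hii : forall mu, is_string mul z mu ->
     (forall x, rinv_star mul r sigma x -> mu x) ->
     forall x, mu x -> mul r x <> z.
  move=> mu [_ [Hmz [Hmdc Hmcm]]] Hsub x Hx Erx.
  apply: Hi; exists (ell x) => t Ht.
  case/orP: (le_total (ell t) (ell x)) => // Hxt.
  have Htm : mu t by apply: Hsub.
  have Hxz : x <> z by move=> E; apply: Hmz; rewrite -E.
  have Htz : t <> z by move=> E; apply: Hmz; rewrite -E.
  have Hrt : mul r t <> z by move=> E; apply: Hnz; rewrite -E.
  have [w [Hw [Hxw Htw]]] := Hmcm _ _ Hx Htm.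
  have Hxt' : sdvd mul x t.
    case: Htw => [Ew|[v Ew]]; first by rewrite -Ew.
    have Hwz : w <> z by move=> E; apply: Hmz; rewrite -E.
    apply: (Hl2 x t v) => //.
    + by move=> E; apply: Hwz; rewrite Ew E H0z.
    + by rewrite -Ew.
    + by rewrite -Ew.
  exfalso; apply: Hrt; case: Hxt' => [->|[u ->]] //.
  by rewrite Hass Erx Hz0.
split=> //; split=> //.
move=> [_ Hmax].
have Hstr : is_string mul z (rinv_star mul r sigma).
  split; first by exists m.
  split; first by rewrite /rinv_star H0z.
  split.
    move=> s t Ht Hst; apply: Hdc Ht _; exact: sdvd_lmul.
  move=> s t Hs Ht.
  have [u [Hu [Hsu Htu]]] := Hcm _ _ Hs Ht.
  have Huz : u <> z by move=> E; apply: Hnz; rewrite -E.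
  have [u' [Eu Hsu']] : exists u', u = mul r u' /\ sdvd mul s u'.
    case: Hsu => [->|[v ->]]; first by exists s; split=> //; left.
    by exists (mul s v); split; [rewrite Hass | right; exists v].
  exists u'; split; first by rewrite /rinv_star -Eu.
  split=> //.
  case: Htu => [Et|[v Ev]].
  - left; apply: (Hcanc r); first by rewrite -Eu Et.
    by rewrite -Eu.
  - right; exists v; apply: (Hcanc r); first by rewrite -Eu Ev Hass.
    by rewrite -Eu.
split=> // tau Htau Hsub x Hx.
pose sg' := fun y => exists x, tau x /\ sdvd mul y (mul r x).
have Hsg' : is_string mul z sg'.
  have Htau' := Htau; case: Htau' => [[x0 Hx0] [Htz [Htdc Htcm]]].
  split; first by exists (mul r x0), x0; split=> //; left.
  split.
    move=> [x1 [Hx1 Hd]]; apply: (Hii tau Htau Hsub x1 Hx1).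
    exact: (sdvd_z HS Hd).
  split.
    move=> s t [x1 [Hx1 Hd]] Hst; exists x1; split=> //.
    exact: (sdvd_trans HS Hst).
  move=> s t [x1 [Hx1 Hd1]] [x2 [Hx2 Hd2]].
  have [x3 [Hx3 [H13 H23]]] := Htcm _ _ Hx1 Hx2.
  exists (mul r x3); split; first by exists x3; split=> //; left.
  split.
  - apply: (sdvd_trans HS Hd1); exact: sdvd_lmul.
  - apply: (sdvd_trans HS Hd2); exact: sdvd_lmul.
have : forall y, sigma y -> sg' y.
  move=> y Hy; have [t [Ht Hyt]] := Hup y Hy.
  by exists t; split=> //; apply: Hsub.
move/(Hmax sg' Hsg')=> H.
apply: H; exists x; split=> //; by left.
Qed.
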